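(* Let $\bar n\ge1$ and let $\theta_2>0$ satisfy $\sin(\theta_2\sqrt n)\neq0$ for all $n\in\{1,\dots,9\bar n+8\}$. With $\Phi$ the Kraus map $\Phi(\rho)=M_g\rho M_g^\dagger+M_e\rho M_e^\dagger+M_m\rho M_m^\dagger$ ($M_g,M_e,M_m$ as in the context), the subspace $\mathcal{H}_0^{9\bar n+8}$ is invariant under $M_g,M_e,M_m$, and for every density operator $\rho_0$ supported in $\mathcal{H}_0^{9\bar n+8}$ the sequence $\rho_{k+1}=\Phi(\rho_k)$ converges to a density operator $\rho_\infty$ supported on $\mathrm{span}\{|\bar n\rangle,|9\bar n+8\rangle\}$.
   Context: Let $\mathcal{H}$ be the Hilbert space with orthonormal (Fock) basis $\{|n\rangle\}_{n\in\mathbb{N}}$ ($\mathbb{N}$ includes $0$). Let $\mathbf{a}=\sum_{n\ge1}\sqrt{n}\,|n-1\rangle\langle n|$, $\mathbf{a}^\dagger$ its adjoint, $\mathbf{N}=\mathbf{a}^\dagger\mathbf{a}=\sum_n n|n\rangle\langle n|$, $\mathbf{I}$ the identity, and for $h:\mathbb{N}\to\mathbb{C}$ write $h(\mathbf{N})=\sum_n h(n)|n\rangle\langle n|$. Let $\mathcal{H}_{n_1}^{n_2}=\mathrm{span}\{|n_1\rangle,\dots,|n_2\rangle\}$. Fix $\theta_1=\pi/\sqrt{\bar n+1}$, $\theta_2>0$ and an arbitrary real phase $\varphi$. Define $M_g=\mathbf{a}^\dagger\,\big(1+\cos\tfrac{\theta_2\sqrt{\mathbf{N}}}{2}\big)\,\frac{\sin(\theta_1\sqrt{\mathbf{N}+\mathbf{I}})}{2\sqrt{\mathbf{N}+\mathbf{I}}}$,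 $M_e=\cos^2\tfrac{\theta_1\sqrt{\mathbf{N}+\mathbf{I}}}{2}\,\cos\tfrac{\theta_2\sqrt{\mathbf{N}}}{2}-\sin^2\tfrac{\theta_1\sqrt{\mathbf{N}+\mathbf{I}}}{2}$, $M_m=e^{i\varphi}\,\mathbf{a}\,\frac{\sin(\theta_2\sqrt{\mathbf{N}}/2)}{\sqrt{\mathbf{N}}}\,\cos\tfrac{\theta_1\sqrt{\mathbf{N}+\mathbf{I}}}{2}$ (the value at $n=0$ of $\sin(\theta_2\sqrt{n}/2)/\sqrt{n}$ is irrelevant). *)

(* Defs.v *)
From Stdlib Require Import Reals.
Open Scope R_scope.

Record C := mkC { Cre : R ; Cim : R }.
Definition C0 : C := mkC 0 0.
Definition C1 : C := mkC 1 0.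
Definition RtoC (x : R) : C := mkC x 0.
Definition Cadd (z w : C) : C := mkC (Cre z + Cre w) (Cim z + Cim w).
Definition Cmul (z w : C) : C :=
  mkC (Cre z * Cre w - Cim z * Cim w) (Cre z * Cim w + Cim z * Cre w).
Definition Cconj (z : C) : C := mkC (Cre z) (- Cim z).
Definition Cexpi (phi : R) : C := mkC (cos phi) (sin phi).

Fixpoint Csum (n : nat) (f : nat -> C) : C :=
  match n with
  | O => C0
  | S m => Cadd (Csum m f) (f m)
  end.

(** Operators on the Fock space are represented by their matrix elements
    [A i j = <i| A |j>] in the Fock basis {|n>}. *)
Definition Op := nat -> nat -> C.

Definition theta1 (nbar : nat) : R := PI / sqrt (INR nbar + 1).

(** Matrix elements of
    M_g = a^dag (1 + cos(theta2 sqrt N / 2)) sin(theta1 sqrt(N+1)) / (2 sqrt(N+1)).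
    Since a^dag |j> = sqrt(j+1) |j+1>, <i|M_g|j> is nonzero only for i = j+1. *)
Definition Mg (nbar : nat) (theta2 : R) : Op := fun i j =>
  if Nat.eqb i (S j) then
    RtoC (sqrt (INR j + 1)
          * ((1 + cos (theta2 * sqrt (INR j) / 2))
             * (sin (theta1 nbar * sqrt (INR j + 1)) / (2 * sqrt (INR j + 1)))))
  else C0.

Definition Me (nbar : nat) (theta2 : R) : Op := fun i j =>
  if Nat.eqb i j then
    RtoC ((cos (theta1 nbar * sqrt (INR j + 1) / 2)) ^ 2
            * cos (theta2 * sqrt (INR j) / 2)
          - (sin (theta1 nbar * sqrt (INR j + 1) / 2)) ^ 2)
  else C0.

(** M_m = e^{i phi} a (sin(theta2 sqrt N / 2)/sqrt N) cos(theta1 sqrt(N+1)/2).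
    Since a |j> = sqrt j |j-1>, <i|M_m|j> is nonzero only for j = i+1 (so j >= 1,
    and the irrelevant value at j = 0 never enters). *)
Definition Mm (nbar : nat) (theta2 phi : R) : Op := fun i j =>
  if Nat.eqb j (S i) then
    Cmul (Cexpi phi)
      (RtoC (sqrt (INR j)
             * ((sin (theta2 * sqrt (INR j) / 2) / sqrt (INR j))
                * cos (theta1 nbar * sqrt (INR j + 1) / 2))))
  else C0.

(** (A rho B^dag)_{ij} for rho supported in H_0^K (sums over k, l <= K). *)
Definition sandwich (K : nat) (A : Op) (rho : Op) : Op := fun i j =>
  Csum (S K) (fun k => Csum (S K) (fun l =>
    Cmul (A i k) (Cmul (rho k l) (Cconj (A j l))))).

Definition Phi (K nbar : nat) (theta2 phi : R) (rho : Op) : Op := fun i j =>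
  Cadd (Cadd (sandwich K (Mg nbar theta2) rho i j)
             (sandwich K (Me nbar theta2) rho i j))
       (sandwich K (Mm nbar theta2 phi) rho i j).

Definition invariant_sub (K : nat) (A : Op) : Prop :=
  forall i j, (j <= K)%nat -> (K < i)%nat -> A i j = C0.

Definition supported_in (K : nat) (rho : Op) : Prop :=
  forall i j, (K < i)%nat \/ (K < j)%nat -> rho i j = C0.

Definition density_on (K : nat) (rho : Op) : Prop :=
  supported_in K rho
  /\ (forall i j, rho j i = Cconj (rho i j))
  /\ (forall v : nat -> C,
        0 <= Cre (Csum (S K) (fun i => Csum (S K) (fun j =>
                   Cmul (Cconj (v i)) (Cmul (rho i j) (v j))))))
  /\ Csum (S K) (fun i => rho i i) = C1.

(** Entrywise convergence (equivalent to any norm convergence in finite dimension). *)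
Definition op_converges (rhos : nat -> Op) (rinf : Op) : Prop :=
  forall i j, Un_cv (fun k => Cre (rhos k i j)) (Cre (rinf i j))
           /\ Un_cv (fun k => Cim (rhos k i j)) (Cim (rinf i j)).

(* Main.v *)
Require Import Defs.
From Stdlib Require Import Reals Lra Lia Psatz.
Require Import Defs.
Open Scope R_scope.


Lemma C_ext z w : Cre z = Cre w -> Cim z = Cim w -> z = w.
Proof. destruct z, w; simpl; intros; subst; reflexivity. Qed.

Ltac Cring := apply C_ext; simpl; ring.

Definition scale (r : R) (z : C) : C := mkC (r * Cre z) (r * Cim z).

Lemma Csum_ext n f g : (forall k, (k < n)%nat -> f k = g k) -> Csum n f = Csum n g.
Proof.
  induction n; simpl; intros H; auto.
  rewrite IHn by (intros; apply H; lia). rewrite H by lia. reflexivity.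
Qed.

Lemma Csum_zero n f : (forall k, (k < n)%nat -> f k = C0) -> Csum n f = C0.
Proof.
  induction n; simpl; intros H; auto.
  rewrite IHn by (intros; apply H; lia). rewrite H by lia. Cring.
Qed.

Lemma Csum_single n f k0 : (k0 < n)%nat ->
  (forall k, (k < n)%nat -> k <> k0 -> f k = C0) -> Csum n f = f k0.
Proof.
  induction n; simpl; intros Hk H; [lia|].
  destruct (Nat.eq_dec k0 n) as [->|Hne].
  - rewrite Csum_zero by (intros; apply H; lia). Cring.
  - rewrite IHn by (try lia; intros; apply H; lia). rewrite (H n) by lia. Cring.
Qed.

Lemma Csum_two n f i0 j0 : (i0 < n)%nat -> (j0 < n)%nat -> i0 <> j0 ->
  (forall k, (k < n)%nat -> k <> i0 -> k <> j0 -> f k = C0) -> Csum n f = Cadd (f i0) (f j0).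
Proof.
  induction n; simpl; intros Hi Hj Hij H; [lia|].
  destruct (Nat.eq_dec i0 n) as [->|Hne].
  - rewrite (Csum_single n f j0) by (try lia; intros; apply H; lia). Cring.
  - destruct (Nat.eq_dec j0 n) as [->|Hne'].
    + rewrite (Csum_single n f i0) by (try lia; intros; apply H; lia). Cring.
    + rewrite IHn by (try lia; intros; apply H; lia). rewrite (H n) by lia. Cring.
Qed.

Lemma Csum_add n f g : Csum n (fun k => Cadd (f k) (g k)) = Cadd (Csum n f) (Csum n g).
Proof. induction n; simpl; [Cring|]. rewrite IHn. Cring. Qed.

Lemma Csum_mul_l n c f : Cmul c (Csum n f) = Csum n (fun k => Cmul c (f k)).
Proof. induction n; simpl; [Cring|]. rewrite <- IHn. Cring. Qed.

Lemma Csum_mul_r n c f : Cmul (Csum n f) c = Csum n (fun k => Cmul (f k) c).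
Proof. induction n; simpl; [Cring|]. rewrite <- IHn. Cring. Qed.

Lemma Csum_conj n f : Cconj (Csum n f) = Csum n (fun k => Cconj (f k)).
Proof. induction n; simpl; [Cring|]. rewrite <- IHn. Cring. Qed.

Lemma Csum_scale n r f : scale r (Csum n f) = Csum n (fun k => scale r (f k)).
Proof. induction n; simpl; [unfold scale; Cring|]. rewrite <- IHn. unfold scale; Cring. Qed.

Lemma Csum_swap n m f :
  Csum n (fun i => Csum m (fun j => f i j)) = Csum m (fun j => Csum n (fun i => f i j)).
Proof.
  induction n; simpl.
  - symmetry. apply Csum_zero. reflexivity.
  - rewrite IHn. rewrite <- Csum_add. reflexivity.
Qed.

Lemma Csum_shift n f : Csum (S n) f = Cadd (f O) (Csum n (fun i => f (S i))).
Proof. induction n; simpl in *; [Cring|]. rewrite IHn. Cring. Qed.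

Lemma Csum_swap4 n f :
  Csum n (fun i => Csum n (fun j => Csum n (fun k => Csum n (fun l => f i j k l)))) =
  Csum n (fun k => Csum n (fun l => Csum n (fun i => Csum n (fun j => f i j k l)))).
Proof.
  transitivity (Csum n (fun i => Csum n (fun k => Csum n (fun j => Csum n (fun l => f i j k l))))).
  { apply Csum_ext; intros i _. apply Csum_swap. }
  rewrite Csum_swap. apply Csum_ext; intros k _.
  transitivity (Csum n (fun i => Csum n (fun l => Csum n (fun j => f i j k l)))).
  { apply Csum_ext; intros i _. apply Csum_swap. }
  apply Csum_swap.
Qed.
Definition Qf (K : nat) (rho : Op) (v : nat -> C) : C :=
  Csum (S K) (fun i => Csum (S K) (fun j => Cmul (Cconj (v i)) (Cmul (rho i j) (v j)))).

Lemma Qf_add K X Y v :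
  Qf K (fun i j => Cadd (X i j) (Y i j)) v = Cadd (Qf K X v) (Qf K Y v).
Proof.
  unfold Qf. rewrite <- Csum_add. apply Csum_ext; intros i _.
  rewrite <- Csum_add. apply Csum_ext; intros j _. Cring.
Qed.

Lemma Qf_sandwich K A rho v :
  Qf K (sandwich K A rho) v =
  Qf K rho (fun l => Csum (S K) (fun j => Cmul (Cconj (A j l)) (v j))).
Proof.
  unfold Qf, sandwich.
  set (n := S K).
  transitivity (Csum n (fun i => Csum n (fun j => Csum n (fun k => Csum n (fun l =>
     Cmul (Cconj (v i)) (Cmul (Cmul (A i k) (Cmul (rho k l) (Cconj (A j l)))) (v j))))))).
  { apply Csum_ext; intros i _. apply Csum_ext; intros j _.
    rewrite Csum_mul_r, Csum_mul_l. apply Csum_ext; intros k _.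
    rewrite Csum_mul_r, Csum_mul_l. reflexivity. }
  rewrite Csum_swap4. apply Csum_ext; intros k _. apply Csum_ext; intros l _.
  rewrite Csum_conj, Csum_mul_l, Csum_mul_r. apply Csum_ext; intros i _.
  rewrite Csum_mul_l. apply Csum_ext; intros j _. Cring.
Qed.

Definition psd (K : nat) (rho : Op) : Prop := forall v, 0 <= Cre (Qf K rho v).

Lemma psd_sandwich K A rho : psd K rho -> psd K (sandwich K A rho).
Proof. intros H v. rewrite Qf_sandwich. apply H. Qed.
Definition gc (n : nat) (t : R) (j : nat) : R :=
  sqrt (INR j + 1)
          * ((1 + cos (t * sqrt (INR j) / 2))
             * (sin (theta1 n * sqrt (INR j + 1)) / (2 * sqrt (INR j + 1)))).
Definition ec (n : nat) (t : R) (j : nat) : R :=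
  (cos (theta1 n * sqrt (INR j + 1) / 2)) ^ 2
            * cos (t * sqrt (INR j) / 2)
          - (sin (theta1 n * sqrt (INR j + 1) / 2)) ^ 2.
Definition mc (n : nat) (t : R) (j : nat) : R :=
  sqrt (INR j)
             * ((sin (t * sqrt (INR j) / 2) / sqrt (INR j))
                * cos (theta1 n * sqrt (INR j + 1) / 2)).

Lemma sqS_pos j : 0 < sqrt (INR j + 1).
Proof. apply sqrt_lt_R0. pose proof (pos_INR j). lra. Qed.

Lemma th_mul n x : theta1 n * x = PI * (x / sqrt (INR n + 1)).
Proof. unfold theta1. pose proof (sqS_pos n). field. lra. Qed.

Lemma gc_simpl n t j : gc n t j =
  (1 + cos (t * sqrt (INR j) / 2)) * sin (theta1 n * sqrt (INR j + 1)) / 2.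
Proof. unfold gc. pose proof (sqS_pos j). field. lra. Qed.

Lemma INR_K n : INR (9 * n + 8) + 1 = 9 * (INR n + 1).
Proof. rewrite plus_INR, mult_INR. simpl. ring. Qed.

Lemma sqrt_K n : sqrt (INR (9 * n + 8) + 1) = 3 * sqrt (INR n + 1).
Proof.
  rewrite INR_K. rewrite sqrt_mult by (try lra; pose proof (pos_INR n); lra).
  replace 9 with (3*3) by ring. rewrite sqrt_square by lra. reflexivity.
Qed.

Lemma th_K n : theta1 n * sqrt (INR (9 * n + 8) + 1) = 3 * PI.
Proof. rewrite sqrt_K, th_mul. pose proof (sqS_pos n). field. lra. Qed.

Lemma th_n n : theta1 n * sqrt (INR n + 1) = PI.
Proof. rewrite th_mul. pose proof (sqS_pos n). field. lra. Qed.

Lemma gc_K n t : gc n t (9 * n + 8) = 0.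
Proof.
  rewrite gc_simpl, th_K.
  replace (3 * PI) with (PI + 2 * INR 1 * PI) by (simpl; ring).
  rewrite sin_period, sin_PI. field.
Qed.

Lemma ec_n n t : ec n t n = -1.
Proof.
  unfold ec. replace (theta1 n * sqrt (INR n + 1) / 2) with (PI/2) by (rewrite th_n; field).
  rewrite cos_PI2, sin_PI2. ring.
Qed.

Lemma ec_K n t : ec n t (9 * n + 8) = -1.
Proof.
  unfold ec. replace (theta1 n * sqrt (INR (9*n+8) + 1) / 2) with (PI/2 + PI) by (rewrite th_K; field).
  rewrite neg_cos, neg_sin, cos_PI2, sin_PI2. ring.
Qed.

Lemma mc_0 n t : mc n t 0 = 0.
Proof. unfold mc. simpl INR. rewrite sqrt_0. ring. Qed.

Lemma completeness n t j : gc n t j ^ 2 + ec n t j ^ 2 + mc n t j ^ 2 = 1.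
Proof.
  assert (Hm : mc n t j = sin (t * sqrt (INR j) / 2) * cos (theta1 n * sqrt (INR j + 1) / 2)).
  { unfold mc. destruct j.
    - simpl INR. rewrite sqrt_0. replace (t * 0 / 2) with 0 by field. rewrite sin_0. ring.
    - assert (0 < sqrt (INR (S j))) by (apply sqrt_lt_R0; apply lt_0_INR; lia).
      field. lra. }
  rewrite Hm, gc_simpl. unfold ec.
  set (a := theta1 n * sqrt (INR j + 1) / 2).
  replace (theta1 n * sqrt (INR j + 1)) with (2 * a) by (unfold a; field).
  rewrite sin_2a.
  set (x := t * sqrt (INR j) / 2).
  pose proof (sin2_cos2 a) as H1. pose proof (sin2_cos2 x) as H2.
  unfold Rsqr in *.
  replace ((1 + cos x) * (2 * sin a * cos a) / 2) with ((1 + cos x) * sin a * cos a) by field.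
  assert (SA : sin a * sin a = 1 - cos a * cos a) by lra.
  assert (SX : sin x * sin x = 1 - cos x * cos x) by lra.
  replace (((1 + cos x) * sin a * cos a) ^ 2) with ((1 + cos x)^2 * (sin a * sin a) * (cos a)^2) by ring.
  replace ((sin x * cos a) ^ 2) with ((sin x * sin x) * (cos a)^2) by ring.
  replace ((cos a ^ 2 * cos x - sin a ^ 2) ^ 2) with ((cos a ^ 2 * cos x - (sin a * sin a)) ^ 2) by ring.
  rewrite SA, SX. generalize (cos a) (cos x). intros u w. ring.
Qed.
Definition sinhyp (n : nat) (t : R) : Prop :=
  forall m : nat, (1 <= m <= 9 * n + 8)%nat -> sin (t * sqrt (INR m)) <> 0.

Lemma opc y : sin (2 * y) <> 0 -> 1 + cos y <> 0.
Proof.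
  intros H E. apply H. rewrite sin_2a.
  pose proof (sin2_cos2 y). unfold Rsqr in *.
  assert (cos y = -1) by lra. assert (sin y * sin y = 0) by nra.
  assert (Z : sin y = 0) by nra. rewrite Z. ring.
Qed.

Lemma sin_half_nz y : sin (2 * y) <> 0 -> sin y <> 0.
Proof. intros H E. apply H. rewrite sin_2a, E. ring. Qed.

Lemma gc_nz n t j : (j < n)%nat -> sinhyp n t -> gc n t j <> 0.
Proof.
  intros Hj Hs. rewrite gc_simpl.
  assert (A : 1 + cos (t * sqrt (INR j) / 2) <> 0).
  { destruct j.
    - simpl INR. rewrite sqrt_0. replace (t * 0 / 2) with 0 by field. rewrite cos_0. lra.
    - apply opc. replace (2 * (t * sqrt (INR (S j)) / 2)) with (t * sqrt (INR (S j))) by field.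
      apply Hs. lia. }
  assert (B : 0 < sin (theta1 n * sqrt (INR j + 1))).
  { rewrite th_mul. pose proof (sqS_pos n). pose proof (sqS_pos j).
    assert (sqrt (INR j + 1) < sqrt (INR n + 1)).
    { apply sqrt_lt_1; try (pose proof (pos_INR j); pose proof (pos_INR n); lra).
      apply lt_INR in Hj. lra. }
    apply sin_gt_0.
    - apply Rmult_lt_0_compat; [apply PI_RGT_0|]. apply Rdiv_lt_0_compat; lra.
    - assert (sqrt (INR j + 1) / sqrt (INR n + 1) < 1).
      { apply (Rmult_lt_reg_r (sqrt (INR n + 1))); [lra|]. field_simplify; lra. }
      pose proof PI_RGT_0. nra. }
  intro E. assert (Hz : (1 + cos (t * sqrt (INR j) / 2)) * sin (theta1 n * sqrt (INR j + 1)) = 0) by lra.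
  apply Rmult_integral in Hz. destruct Hz; [contradiction | lra].
Qed.

Lemma mc_nz n t J : (n < J)%nat -> (J < 9 * n + 8)%nat -> sinhyp n t -> mc n t J <> 0.
Proof.
  intros H1 H2 Hs.
  assert (HJ : 0 < sqrt (INR J)) by (apply sqrt_lt_R0; apply lt_0_INR; lia).
  assert (Hm : mc n t J = sin (t * sqrt (INR J) / 2) * cos (theta1 n * sqrt (INR J + 1) / 2)).
  { unfold mc. field. lra. }
  rewrite Hm.
  assert (A : sin (t * sqrt (INR J) / 2) <> 0).
  { apply sin_half_nz. replace (2 * (t * sqrt (INR J) / 2)) with (t * sqrt (INR J)) by field.
    apply Hs. lia. }
  assert (B : cos (theta1 n * sqrt (INR J + 1) / 2) < 0).
  { rewrite th_mul. pose proof (sqS_pos n). pose proof (sqS_pos J).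
    assert (sqrt (INR n + 1) < sqrt (INR J + 1)).
    { apply sqrt_lt_1; try (pose proof (pos_INR J); pose proof (pos_INR n); lra).
      apply lt_INR in H1. lra. }
    assert (sqrt (INR J + 1) < 3 * sqrt (INR n + 1)).
    { rewrite <- sqrt_K. apply sqrt_lt_1; try (pose proof (pos_INR J); pose proof (pos_INR (9*n+8)); lra).
      apply lt_INR in H2. lra. }
    set (r := sqrt (INR J + 1) / sqrt (INR n + 1)).
    assert (1 < r) by (unfold r; apply (Rmult_lt_reg_r (sqrt (INR n + 1))); [lra|]; field_simplify; lra).
    assert (r < 3) by (unfold r; apply (Rmult_lt_reg_r (sqrt (INR n + 1))); [lra|]; field_simplify; lra).
    pose proof PI_RGT_0.
    apply cos_lt_0; nra. }
  intro E. apply Rmult_integral in E. destruct E; [contradiction | lra].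
Qed.
Lemma Mg_S n t j : Mg n t (S j) j = RtoC (gc n t j).
Proof. unfold Mg. rewrite Nat.eqb_refl. reflexivity. Qed.
Lemma Mg_ne n t i k : i <> S k -> Mg n t i k = C0.
Proof. intros H. unfold Mg. apply Nat.eqb_neq in H. rewrite H. reflexivity. Qed.
Lemma Me_d n t j : Me n t j j = RtoC (ec n t j).
Proof. unfold Me. rewrite Nat.eqb_refl. reflexivity. Qed.
Lemma Me_ne n t i k : i <> k -> Me n t i k = C0.
Proof. intros H. unfold Me. apply Nat.eqb_neq in H. rewrite H. reflexivity. Qed.
Lemma Mm_S n t p i : Mm n t p i (S i) = Cmul (Cexpi p) (RtoC (mc n t (S i))).
Proof. unfold Mm. rewrite Nat.eqb_refl. reflexivity. Qed.
Lemma Mm_ne n t p i k : k <> S i -> Mm n t p i k = C0.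
Proof. intros H. unfold Mm. apply Nat.eqb_neq in H. rewrite H. reflexivity. Qed.

Lemma phase_alg p a b z :
  Cmul (Cmul (Cexpi p) (RtoC a)) (Cmul z (Cconj (Cmul (Cexpi p) (RtoC b)))) = scale (a*b) z.
Proof.
  pose proof (sin2_cos2 p) as H. unfold Rsqr in H.
  unfold Cexpi, scale. destruct z as [x y]. simpl.
  set (c := cos p) in *. set (s := sin p) in *. clearbody c s.
  apply C_ext; simpl.
  - transitivity (a*b*x*(s*s+c*c)); [ring| rewrite H; ring].
  - transitivity (a*b*y*(s*s+c*c)); [ring| rewrite H; ring].
Qed.

Lemma real_alg a b z : Cmul (RtoC a) (Cmul z (Cconj (RtoC b))) = scale (a*b) z.
Proof. unfold scale; Cring. Qed.

Lemma sandwich_row0 K A rho i j : (forall k, (k < S K)%nat -> A i k = C0) -> sandwich K A rho i j = C0.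
Proof.
  intros H. unfold sandwich. apply Csum_zero; intros k Hk. apply Csum_zero; intros l Hl.
  rewrite H by auto. Cring.
Qed.

Lemma sandwich_col0 K A rho i j : (forall l, (l < S K)%nat -> A j l = C0) -> sandwich K A rho i j = C0.
Proof.
  intros H. unfold sandwich. apply Csum_zero; intros k Hk. apply Csum_zero; intros l Hl.
  rewrite (H l) by auto. Cring.
Qed.

Lemma sandwich_pt K A rho i j k0 l0 : (k0 <= K)%nat -> (l0 <= K)%nat ->
  (forall k, k <> k0 -> A i k = C0) -> (forall l, l <> l0 -> A j l = C0) ->
  sandwich K A rho i j = Cmul (A i k0) (Cmul (rho k0 l0) (Cconj (A j l0))).
Proof.
  intros Hk Hl H1 H2. unfold sandwich.
  rewrite (Csum_single _ _ k0) by (try lia; intros k _ Hne; apply Csum_zero; intros l _; rewrite H1 by auto; Cring).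
  rewrite (Csum_single _ _ l0); [reflexivity|lia|]. intros l _ Hne. rewrite H2 by auto. Cring.
Qed.

Definition gterm (n : nat) (t : R) (rho : Op) (i j : nat) : C :=
  match i, j with S i', S j' => scale (gc n t i' * gc n t j') (rho i' j') | _, _ => C0 end.

Lemma sw_g K n t rho i j : (i <= K)%nat -> (j <= K)%nat ->
  sandwich K (Mg n t) rho i j = gterm n t rho i j.
Proof.
  intros Hi Hj. unfold gterm. destruct i as [|i'].
  - apply sandwich_row0. intros k _. apply Mg_ne. lia.
  - destruct j as [|j'].
    + apply sandwich_col0. intros l _. apply Mg_ne. lia.
    + rewrite (sandwich_pt K _ _ _ _ i' j') by (try lia; intros; apply Mg_ne; lia).
      rewrite !Mg_S. apply real_alg.
Qed.

Lemma sw_e K n t rho i j : (i <= K)%nat -> (j <= K)%nat ->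
  sandwich K (Me n t) rho i j = scale (ec n t i * ec n t j) (rho i j).
Proof.
  intros Hi Hj. rewrite (sandwich_pt K _ _ _ _ i j) by (try lia; intros; apply Me_ne; lia).
  rewrite !Me_d. apply real_alg.
Qed.

Lemma sw_m K n t p rho i j : supported_in K rho ->
  sandwich K (Mm n t p) rho i j = scale (mc n t (S i) * mc n t (S j)) (rho (S i) (S j)).
Proof.
  intros Hs.
  destruct (Compare_dec.le_lt_dec (S i) K) as [Hi|Hi].
  - destruct (Compare_dec.le_lt_dec (S j) K) as [Hj|Hj].
    + rewrite (sandwich_pt K _ _ _ _ (S i) (S j)) by (try lia; intros; apply Mm_ne; lia).
      rewrite !Mm_S. apply phase_alg.
    + rewrite sandwich_col0 by (intros; apply Mm_ne; lia).
      rewrite Hs by lia. unfold scale; Cring.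
  - rewrite sandwich_row0 by (intros; apply Mm_ne; lia).
    rewrite Hs by lia. unfold scale; Cring.
Qed.
Lemma Csum_S m f : Csum (S m) f = Cadd (Csum m f) (f m).
Proof. reflexivity. Qed.

Section PhiProps.
Variables (n : nat) (t p : R).
Let K := (9 * n + 8)%nat.
Let PhiK := Phi K n t p.

Lemma Phi_formula rho i j : supported_in K rho -> (i <= K)%nat -> (j <= K)%nat ->
  PhiK rho i j = Cadd (Cadd (gterm n t rho i j) (scale (ec n t i * ec n t j) (rho i j)))
                      (scale (mc n t (S i) * mc n t (S j)) (rho (S i) (S j))).
Proof.
  intros Hs Hi Hj. unfold PhiK, Phi. rewrite sw_g, sw_e, sw_m; auto.
Qed.

Lemma Mg_rowK i k : (k < S K)%nat -> (K < i)%nat -> Mg n t i k = C0.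
Proof.
  intros Hk Hi. destruct (Nat.eq_dec i (S k)) as [->|Hne].
  - assert (k = K) by lia. subst k. rewrite Mg_S. unfold K. rewrite gc_K. reflexivity.
  - apply Mg_ne; auto.
Qed.

Lemma Phi_supp rho : supported_in K rho -> supported_in K (PhiK rho).
Proof.
  intros Hs i j [Hi|Hj]; unfold PhiK, Phi.
  - rewrite (sandwich_row0 K (Mg n t)) by (intros; apply Mg_rowK; auto).
    rewrite (sandwich_row0 K (Me n t)) by (intros; apply Me_ne; lia).
    rewrite (sandwich_row0 K (Mm n t p)) by (intros; apply Mm_ne; lia). Cring.
  - rewrite (sandwich_col0 K (Mg n t)) by (intros; apply Mg_rowK; auto).
    rewrite (sandwich_col0 K (Me n t)) by (intros; apply Me_ne; lia).
    rewrite (sandwich_col0 K (Mm n t p)) by (intros; apply Mm_ne; lia). Cring.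
Qed.

Definition herm (rho : Op) : Prop := forall i j, rho j i = Cconj (rho i j).

Lemma Phi_herm rho : supported_in K rho -> herm rho -> herm (PhiK rho).
Proof.
  intros Hs Hh i j.
  destruct (Compare_dec.le_lt_dec i K) as [Hi|Hi].
  - destruct (Compare_dec.le_lt_dec j K) as [Hj|Hj].
    + rewrite !Phi_formula by auto.
      rewrite (Hh i j), (Hh (S i) (S j)).
      unfold gterm. destruct i as [|i']; destruct j as [|j']; try (unfold scale; Cring).
      rewrite (Hh i' j'). unfold scale; Cring.
    + rewrite !Phi_supp by (auto; lia). Cring.
  - rewrite !Phi_supp by (auto; lia). Cring.
Qed.

Lemma Phi_psd rho : psd K rho -> psd K (PhiK rho).
Proof.
  intros H v. unfold PhiK, Phi.
  rewrite (Qf_add K (fun i j => Cadd (sandwich K (Mg n t) rho i j) (sandwich K (Me n t) rho i j))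
                    (sandwich K (Mm n t p) rho)).
  rewrite (Qf_add K (sandwich K (Mg n t) rho) (sandwich K (Me n t) rho)).
  unfold Cadd at 1 2. cbn [Cre].
  pose proof (psd_sandwich K (Mg n t) rho H v).
  pose proof (psd_sandwich K (Me n t) rho H v).
  pose proof (psd_sandwich K (Mm n t p) rho H v). lra.
Qed.

Lemma Phi_trace rho : supported_in K rho ->
  Csum (S K) (fun i => PhiK rho i i) = Csum (S K) (fun i => rho i i).
Proof.
  intros Hs.
  rewrite (Csum_ext _ _ (fun i => Cadd (Cadd (gterm n t rho i i) (scale (ec n t i * ec n t i) (rho i i)))
                      (scale (mc n t (S i) * mc n t (S i)) (rho (S i) (S i)))))
    by (intros; apply Phi_formula; auto; lia).
  rewrite !Csum_add.
  set (G := Csum (S K) (fun i => scale (gc n t i * gc n t i) (rho i i))).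
  set (M := Csum (S K) (fun i => scale (mc n t i * mc n t i) (rho i i))).
  assert (HG : Csum (S K) (fun i => gterm n t rho i i) = G).
  { rewrite Csum_shift. unfold G. rewrite Csum_S. unfold gterm at 1.
    replace (scale (gc n t K * gc n t K) (rho K K)) with C0
      by (unfold K; rewrite gc_K; unfold scale; Cring).
    apply C_ext; unfold Cadd; cbn [Cre Cim]; unfold gterm; cbn [Cre Cim C0]; ring. }
  assert (HM : Csum (S K) (fun i => scale (mc n t (S i) * mc n t (S i)) (rho (S i) (S i))) = M).
  { unfold M. set (h := fun i => scale (mc n t i * mc n t i) (rho i i)).
    change (Csum (S K) (fun i => h (S i)) = Csum (S K) h).
    transitivity (Csum (S (S K)) h).
    - rewrite (Csum_shift (S K) h).
      replace (h 0%nat) with C0 by (unfold h; rewrite mc_0; unfold scale; Cring).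
      apply C_ext; unfold Cadd; cbn [Cre Cim C0]; ring.
    - rewrite Csum_S.
      replace (h (S K)) with C0 by (unfold h; rewrite (Hs (S K) (S K)) by lia; unfold scale; Cring).
      apply C_ext; unfold Cadd; cbn [Cre Cim C0]; ring. }
  rewrite HG, HM. unfold G, M. rewrite <- !Csum_add. apply Csum_ext. intros i _.
  pose proof (completeness n t i). unfold scale. apply C_ext; simpl.
  - transitivity ((gc n t i ^2 + ec n t i ^2 + mc n t i ^2) * Cre (rho i i)); [ring|rewrite H; ring].
  - transitivity ((gc n t i ^2 + ec n t i ^2 + mc n t i ^2) * Cim (rho i i)); [ring|rewrite H; ring].
Qed.

Lemma Phi_density rho : density_on K rho -> density_on K (PhiK rho).
Proof.
  intros [Hs [Hh [Hp Ht]]]. split; [|split; [|split]].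
  - apply Phi_supp; auto.
  - apply Phi_herm; auto.
  - intros v. apply (Phi_psd rho Hp v).
  - rewrite Phi_trace; auto.
Qed.

End PhiProps.
Section Dens.
Variable K : nat.
Variable rho : Op.
Hypothesis D : density_on K rho.

Lemma dens_supp : supported_in K rho. Proof. apply D. Qed.
Lemma dens_herm i j : rho j i = Cconj (rho i j). Proof. apply D. Qed.
Lemma dens_psd v : 0 <= Cre (Qf K rho v). Proof. apply D. Qed.
Lemma dens_tr : Csum (S K) (fun i => rho i i) = C1. Proof. apply D. Qed.

Lemma diag_im i : Cim (rho i i) = 0.
Proof. pose proof (dens_herm i i) as H. apply (f_equal Cim) in H. simpl in H. lra. Qed.

Definition v2 (i j : nat) (x y : C) : nat -> C :=
  fun k => if Nat.eqb k i then x else if Nat.eqb k j then y else C0.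

Lemma Qf_two i j x y : i <> j -> (i <= K)%nat -> (j <= K)%nat ->
  Qf K rho (v2 i j x y) =
  Cadd (Cadd (Cmul (Cconj x) (Cmul (rho i i) x)) (Cmul (Cconj x) (Cmul (rho i j) y)))
       (Cadd (Cmul (Cconj y) (Cmul (rho j i) x)) (Cmul (Cconj y) (Cmul (rho j j) y))).
Proof.
  intros Hij Hi Hj. unfold Qf.
  assert (Vi : v2 i j x y i = x) by (unfold v2; rewrite Nat.eqb_refl; auto).
  assert (Vj : v2 i j x y j = y) by (unfold v2; rewrite Nat.eqb_refl;
     destruct (Nat.eqb_spec j i); [lia|auto]).
  assert (V0 : forall k, k <> i -> k <> j -> v2 i j x y k = C0)
    by (intros k H1 H2; unfold v2; destruct (Nat.eqb_spec k i); destruct (Nat.eqb_spec k j); auto; lia).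
  rewrite (Csum_two _ _ i j) by (try lia; intros k _ H1 H2; apply Csum_zero; intros l _; rewrite V0 by auto; Cring).
  rewrite (Csum_two _ _ i j) by (try lia; intros k _ H1 H2; rewrite (V0 k) by auto; Cring).
  rewrite (Csum_two _ _ i j) by (try lia; intros k _ H1 H2; rewrite (V0 k) by auto; Cring).
  rewrite Vi, Vj. reflexivity.
Qed.

Lemma diag_nonneg i : 0 <= Cre (rho i i).
Proof.
  destruct (Compare_dec.le_lt_dec i K) as [Hi|Hi].
  - pose proof (dens_psd (fun k => if Nat.eqb k i then C1 else C0)) as H.
    unfold Qf in H.
    rewrite (Csum_single _ _ i) in H by (try lia; intros k _ Hk; apply Csum_zero; intros l _;
      apply Nat.eqb_neq in Hk; rewrite Hk; Cring).
    rewrite (Csum_single _ _ i) in H by (try lia; intros k _ Hk;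
      apply Nat.eqb_neq in Hk; rewrite Hk; Cring).
    rewrite Nat.eqb_refl in H. simpl in H. lra.
  - rewrite dens_supp by lia. simpl. lra.
Qed.

Lemma Csum_re_nonneg n f : (forall k, (k < n)%nat -> 0 <= Cre (f k)) -> 0 <= Cre (Csum n f).
Proof.
  induction n; intros H; simpl; [lra|].
  pose proof (H n ltac:(lia)). pose proof (IHn (fun k Hk => H k ltac:(lia))). lra.
Qed.

Lemma Csum_re_ge n f i : (forall k, (k < n)%nat -> 0 <= Cre (f k)) -> (i < n)%nat ->
  Cre (f i) <= Cre (Csum n f).
Proof.
  induction n; intros H Hi; [lia|]. simpl.
  pose proof (Csum_re_nonneg n f (fun k Hk => H k ltac:(lia))).
  destruct (Nat.eq_dec i n) as [->|Hne].
  - lra.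
  - pose proof (IHn (fun k Hk => H k ltac:(lia)) ltac:(lia)). pose proof (H n ltac:(lia)). lra.
Qed.

Lemma diag_le1 i : Cre (rho i i) <= 1.
Proof.
  destruct (Compare_dec.le_lt_dec i K) as [Hi|Hi].
  - pose proof (Csum_re_ge (S K) (fun i => rho i i) i (fun k _ => diag_nonneg k) ltac:(lia)) as H.
    rewrite dens_tr in H. simpl in H. lra.
  - rewrite dens_supp by lia. simpl. lra.
Qed.

Lemma off_bound i j : i <> j -> forall t, 0 < t ->
  2 * Rabs (Cre (rho i j)) <= t * Cre (rho i i) + Cre (rho j j) / t /\
  2 * Rabs (Cim (rho i j)) <= t * Cre (rho i i) + Cre (rho j j) / t.
Proof.
  intros Hij t Ht.
  pose proof (diag_nonneg i). pose proof (diag_nonneg j).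
  assert (0 <= t * Cre (rho i i) + Cre (rho j j) / t).
  { assert (0 <= Cre (rho j j) / t) by (unfold Rdiv; pose proof (Rinv_0_lt_compat t Ht); nra). nra. }
  destruct (Compare_dec.le_lt_dec i K) as [Hi|Hi];
  [destruct (Compare_dec.le_lt_dec j K) as [Hj|Hj]|].
  2,3: rewrite dens_supp by lia; simpl; rewrite Rabs_R0; lra.
  assert (Q : forall x y, 0 <= Cre (Cadd (Cadd (Cmul (Cconj x) (Cmul (rho i i) x)) (Cmul (Cconj x) (Cmul (rho i j) y)))
       (Cadd (Cmul (Cconj y) (Cmul (rho j i) x)) (Cmul (Cconj y) (Cmul (rho j j) y))))).
  { intros x y. rewrite <- Qf_two by auto. apply dens_psd. }
  rewrite (dens_herm i j) in Q.
  pose proof (diag_im i) as Ii. pose proof (diag_im j) as Ij.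
  destruct (rho i i) as [a a'] eqn:Ea. destruct (rho j j) as [b b'] eqn:Eb.
  destruct (rho i j) as [c c'] eqn:Ec. simpl in *. subst a' b'.
  pose proof (Q (RtoC t) (RtoC 1)) as Q1. pose proof (Q (RtoC t) (RtoC (-1))) as Q2.
  pose proof (Q (RtoC t) (mkC 0 1)) as Q3. pose proof (Q (RtoC t) (mkC 0 (-1))) as Q4.
  simpl in Q1, Q2, Q3, Q4.
  assert (Et : t * (t * a + b / t) = t * t * a + b) by (field; lra).
  assert (Hk : forall z, 2 * t * z <= t * t * a + b -> 2 * z <= t * a + b / t).
  { intros z Hz. apply (Rmult_le_reg_l t); [lra|]. rewrite Et. lra. }
  split; unfold Rabs; destruct (Rcase_abs _); apply Hk; nra.
Qed.

End Dens.
Lemma Un_cv_ext u v l : (forall k, u k = v k) -> Un_cv u l -> Un_cv v l.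
Proof. intros E H eps He. destruct (H eps He) as [N HN]. exists N. intros k Hk. rewrite <- E. auto. Qed.

Lemma Un_cv_const c : Un_cv (fun _ => c) c.
Proof. intros eps He. exists O. intros. unfold R_dist. rewrite Rminus_diag, Rabs_R0. auto. Qed.

Lemma Un_cv_scal a u l : Un_cv u l -> Un_cv (fun k => a * u k) (a * l).
Proof. intros H. apply (CV_mult (fun _ => a) u). apply Un_cv_const. auto. Qed.

Lemma Un_cv_nonneg u l : (forall k, 0 <= u k) -> Un_cv u l -> 0 <= l.
Proof. intros H Hc. apply Rle_cv_lim with (Un := fun _ => 0) (Vn := u); auto. apply Un_cv_const. Qed.

Definition Ccv (z : nat -> C) (w : C) : Prop :=
  Un_cv (fun k => Cre (z k)) (Cre w) /\ Un_cv (fun k => Cim (z k)) (Cim w).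

Lemma Ccv_ext z z' w : (forall k, z k = z' k) -> Ccv z w -> Ccv z' w.
Proof. intros E [H1 H2]. split; eapply Un_cv_ext; eauto; intros; simpl; rewrite E; auto. Qed.

Lemma Ccv_const c : Ccv (fun _ => c) c.
Proof. split; apply Un_cv_const. Qed.

Lemma Ccv_add z1 z2 w1 w2 : Ccv z1 w1 -> Ccv z2 w2 -> Ccv (fun k => Cadd (z1 k) (z2 k)) (Cadd w1 w2).
Proof. intros [A1 A2] [B1 B2]. split; simpl; apply CV_plus; auto. Qed.

Lemma Ccv_mul z1 z2 w1 w2 : Ccv z1 w1 -> Ccv z2 w2 -> Ccv (fun k => Cmul (z1 k) (z2 k)) (Cmul w1 w2).
Proof.
  intros [A1 A2] [B1 B2]. split; simpl.
  - apply CV_minus; apply CV_mult; auto.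
  - apply CV_plus; apply CV_mult; auto.
Qed.

Lemma Ccv_conj z w : Ccv z w -> Ccv (fun k => Cconj (z k)) (Cconj w).
Proof.
  intros [A1 A2]. split; simpl; auto.
  apply (Un_cv_ext (opp_seq (fun k => Cim (z k)))); [intros; unfold opp_seq; auto|].
  apply CV_opp; auto.
Qed.

Lemma Ccv_Csum m (f : nat -> nat -> C) g :
  (forall i, Ccv (fun k => f k i) (g i)) -> Ccv (fun k => Csum m (f k)) (Csum m g).
Proof.
  intros H. induction m; simpl.
  - apply Ccv_const.
  - apply Ccv_add; auto.
Qed.

Lemma Ccv_unique z w1 w2 : Ccv z w1 -> Ccv z w2 -> w1 = w2.
Proof.
  intros [A1 A2] [B1 B2]. apply C_ext; eapply UL_sequence; eauto.
Qed.

Lemma dens_limit K (rs : nat -> Op) (r : Op) :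
  (forall k, density_on K (rs k)) -> (forall i j, Ccv (fun k => rs k i j) (r i j)) ->
  density_on K r.
Proof.
  intros D C. split; [|split; [|split]].
  - intros i j Hij. apply (Ccv_unique (fun k => rs k i j)); auto.
    eapply Ccv_ext; [|apply Ccv_const]. intros k; simpl. symmetry. apply (D k). auto.
  - intros i j. apply (Ccv_unique (fun k => rs k j i)); auto.
    eapply Ccv_ext; [|apply Ccv_conj; apply C]. intros k; simpl. symmetry. apply (D k).
  - intros v.
    assert (Hc : Ccv (fun k => Qf K (rs k) v) (Qf K r v)).
    { unfold Qf. apply Ccv_Csum. intros i. apply Ccv_Csum. intros j.
      apply Ccv_mul; [apply Ccv_const|]. apply Ccv_mul; [apply C|apply Ccv_const]. }
    destruct Hc as [Hc _]. apply (Un_cv_nonneg _ _ (fun k => proj1 (proj2 (proj2 (D k))) v) Hc).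
  - apply (Ccv_unique (fun k => Csum (S K) (fun i => rs k i i))).
    + apply Ccv_Csum. intros i. apply C.
    + eapply Ccv_ext; [|apply Ccv_const]. intros k. symmetry. apply (D k).
Qed.

Fixpoint rs (N : nat) (f : nat -> R) : R :=
  match N with O => 0 | S m => rs m f + f m end.

Lemma rs_le N f g : (forall k, f k <= g k) -> rs N f <= rs N g.
Proof. induction N; simpl; intros; [lra|]. specialize (IHN H). specialize (H N). lra. Qed.

Lemma rs_scal N c f : rs N (fun k => c * f k) = c * rs N f.
Proof. induction N; simpl; [ring|]. rewrite IHN. ring. Qed.

Lemma rs_nonneg N f : (forall k, 0 <= f k) -> 0 <= rs N f.
Proof. induction N; simpl; intros; [lra|]. specialize (IHN H). specialize (H N). lra. Qed.

Lemma rs_shift N f : rs (S N) f = f O + rs N (fun k => f (S k)).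
Proof. induction N; simpl in *; [ring|]. rewrite IHN. ring. Qed.

Definition SB (u : nat -> R) : Prop := exists B, forall N, rs N u <= B.

Lemma SB_step u w c : 0 < c -> (forall k, 0 <= w k) -> (forall k, c * u k <= w (S k)) -> SB w -> SB u.
Proof.
  intros Hc Hw Hu [B HB]. exists (B / c). intros N.
  apply (Rmult_le_reg_l c); [lra|]. replace (c * (B / c)) with B by (field; lra).
  rewrite <- rs_scal. eapply Rle_trans; [apply (rs_le N _ (fun k => w (S k))); auto|].
  pose proof (HB (S N)). rewrite rs_shift in H. pose proof (Hw O). lra.
Qed.

Lemma SB_cv0 u : (forall k, 0 <= u k) -> SB u -> Un_cv u 0.
Proof.
  intros Hu [B HB].
  destruct (growing_cv (fun N => rs N u)) as [l Hl].
  - intros N. simpl. specialize (Hu N). lra.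
  - exists B. intros x [i ->]. auto.
  - assert (H1 : Un_cv (fun N => rs (S N) u) l).
    { apply (Un_cv_ext (fun N => rs (N + 1) u)). intros; f_equal; lia. apply (CV_shift' (fun N => rs N u) 1 l). auto. }
    pose proof (CV_minus _ _ _ _ H1 Hl) as H2.
    replace 0 with (l - l) by ring. eapply Un_cv_ext; [|exact H2]. intros k; simpl; ring.
Qed.

Lemma vanish x q : Un_cv q 0 -> (forall k t, 0 < t -> 2 * Rabs (x k) <= t * q k + / t) -> Un_cv x 0.
Proof.
  intros Hq Hx eps He.
  destruct (Hq (eps * eps / 4)) as [N HN]. { nra. }
  exists N. intros k Hk. specialize (HN k Hk). unfold R_dist in *. rewrite Rminus_0_r in *.
  specialize (Hx k (2 / eps) ltac:(apply Rdiv_lt_0_compat; lra)).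
  assert (q k < eps * eps / 4) by (pose proof (Rle_abs (q k)); lra).
  replace (/ (2 / eps)) with (eps / 2) in Hx by (field; lra).
  assert (2 / eps * q k <= 2 / eps * (eps * eps / 4)).
  { apply Rmult_le_compat_l; [left; apply Rdiv_lt_0_compat; lra | lra]. }
  replace (2 / eps * (eps * eps / 4)) with (eps / 2) in H0 by (field; lra).
  lra.
Qed.

Lemma series_cv x u w g : (forall k, x (S k) = x k + g * u k) -> (forall k, Rabs (u k) <= w k) ->
  SB w -> exists l, Un_cv x l.
Proof.
  intros Hx Hu [B HB].
  assert (Hw : forall k, 0 <= w k) by (intros k; pose proof (Hu k); pose proof (Rabs_pos (u k)); lra).
  destruct (growing_cv (fun N => rs N w)) as [lw Hlw].
  { intros N. simpl. specialize (Hw N). lra. }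
  { exists B. intros z [i ->]. auto. }
  assert (Hb : forall k, x k <= x O + Rabs g * rs k w).
  { induction k; simpl; [lra|]. rewrite Hx.
    pose proof (Rle_abs (g * u k)). rewrite Rabs_mult in H.
    pose proof (Rmult_le_compat_l (Rabs g) _ _ (Rabs_pos g) (Hu k)). lra. }
  destruct (growing_cv (fun k => x k + Rabs g * rs k w)) as [ly Hly].
  { intros k. simpl. rewrite Hx.
    pose proof (Rle_abs (- (g * u k))). rewrite Rabs_Ropp, Rabs_mult in H.
    pose proof (Rmult_le_compat_l (Rabs g) _ _ (Rabs_pos g) (Hu k)). lra. }
  { exists (x O + 2 * Rabs g * B). intros z [i ->]. pose proof (Hb i). pose proof (HB i).
    pose proof (Rabs_pos g). nra. }
  exists (ly - Rabs g * lw).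
  eapply Un_cv_ext; [|apply (CV_minus _ _ _ _ Hly (Un_cv_scal (Rabs g) _ _ Hlw))].
  intros k; simpl; ring.
Qed.
Lemma gterm_pred n t (rho : Op) i j : (1 <= i)%nat -> (1 <= j)%nat ->
  gterm n t rho i j = scale (gc n t (i - 1) * gc n t (j - 1)) (rho (i - 1)%nat (j - 1)%nat).
Proof. intros Hi Hj. destruct i; [lia|]. destruct j; [lia|]. simpl. rewrite !Nat.sub_0_r. reflexivity. Qed.

Lemma rs_lin N a b u v : rs N (fun k => a * u k + b * v k) = a * rs N u + b * rs N v.
Proof. induction N; simpl; [ring|]. rewrite IHN. ring. Qed.

Lemma match_pred m (f : nat -> R) : (1 <= m)%nat -> match m with O => 0 | S j => f j end = f (m - 1)%nat.
Proof. intros H. destruct m; [lia|]. simpl. rewrite Nat.sub_0_r. reflexivity. Qed.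

Section Main.
Variables (n : nat) (t p : R) (rho0 : Op).
Hypothesis Hn : (1 <= n)%nat.
Hypothesis Hs : sinhyp n t.
Hypothesis D0 : density_on (9 * n + 8) rho0.
Let K := (9 * n + 8)%nat.

Definition rk (k : nat) : Op := Nat.iter k (Phi K n t p) rho0.

Lemma rk_S k : rk (S k) = Phi K n t p (rk k). Proof. reflexivity. Qed.

Lemma Dk k : density_on K (rk k).
Proof. induction k; [exact D0|]. rewrite rk_S. apply Phi_density. auto. Qed.

Definition pj (j k : nat) : R := Cre (rk k j j).

Lemma pj_nn j k : 0 <= pj j k. Proof. apply (diag_nonneg K (rk k) (Dk k)). Qed.
Lemma pj_le1 j k : pj j k <= 1. Proof. apply (diag_le1 K (rk k) (Dk k)). Qed.

Lemma diag_rec j k : (j <= K)%nat ->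
  pj j (S k) = (match j with O => 0 | S j' => gc n t j' * gc n t j' * pj j' k end)
     + ec n t j * ec n t j * pj j k + mc n t (S j) * mc n t (S j) * pj (S j) k.
Proof.
  intros Hj. unfold pj. rewrite rk_S. unfold K. rewrite Phi_formula by (auto; apply (Dk k)).
  destruct j; simpl; ring.
Qed.

Lemma R1 j k : (1 <= j <= K)%nat -> gc n t (j - 1) * gc n t (j - 1) * pj (j - 1) k <= pj j (S k).
Proof.
  intros Hj. rewrite diag_rec by lia.
  rewrite (match_pred j (fun j' => gc n t j' * gc n t j' * pj j' k)) by lia.
  pose proof (pj_nn j k). pose proof (pj_nn (S j) k).
  assert (0 <= ec n t j * ec n t j) by nra.
  assert (0 <= mc n t (S j) * mc n t (S j)) by nra. nra.
Qed.

Lemma R2 j k : (j <= K)%nat -> mc n t (S j) * mc n t (S j) * pj (S j) k <= pj j (S k).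
Proof.
  intros Hj. rewrite diag_rec by lia.
  assert (0 <= match j with O => 0 | S j' => gc n t j' * gc n t j' * pj j' k end)
    by (destruct j; [lra|]; pose proof (pj_nn j k); nra).
  pose proof (pj_nn j k). assert (0 <= ec n t j * ec n t j) by nra. nra.
Qed.

Lemma R3 k : pj n (S k) = pj n k + gc n t (n - 1) * gc n t (n - 1) * pj (n - 1) k
                          + mc n t (S n) * mc n t (S n) * pj (S n) k.
Proof.
  rewrite diag_rec by (unfold K; lia). rewrite ec_n.
  rewrite (match_pred n (fun j' => gc n t j' * gc n t j' * pj j' k)) by lia. ring.
Qed.

Lemma R4 k : pj K k <= pj K (S k).
Proof.
  rewrite (diag_rec K) by lia.
  replace (ec n t K) with (-1) by (unfold K; rewrite ec_K; auto).
  rewrite (match_pred K (fun j' => gc n t j' * gc n t j' * pj j' k)) by (unfold K; lia).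
  pose proof (pj_nn (K - 1) k). pose proof (pj_nn (S K) k). nra.
Qed.

Lemma SB_base : SB (pj (n - 1)) /\ SB (pj (S n)).
Proof.
  set (a := gc n t (n - 1) * gc n t (n - 1)). set (b := mc n t (S n) * mc n t (S n)).
  assert (Ha : 0 < a).
  { unfold a. pose proof (gc_nz n t (n - 1) ltac:(lia) Hs). nra. }
  assert (Hb : 0 < b).
  { unfold b. pose proof (mc_nz n t (S n) ltac:(lia) ltac:(lia) Hs). nra. }
  assert (Tel : forall N, rs N (fun k => a * pj (n - 1) k + b * pj (S n) k) = pj n N - pj n O).
  { induction N; simpl; [ring|]. rewrite IHN, R3. fold a b. ring. }
  assert (Bd : forall N, a * rs N (pj (n - 1)) + b * rs N (pj (S n)) <= 1).
  { intros N. rewrite <- rs_lin, Tel. pose proof (pj_le1 n N). pose proof (pj_nn n O). lra. }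
  split.
  - exists (1 / a). intros N. apply (Rmult_le_reg_l a); [lra|].
    replace (a * (1 / a)) with 1 by (field; lra).
    pose proof (Bd N). pose proof (rs_nonneg N (pj (S n)) (pj_nn (S n))). nra.
  - exists (1 / b). intros N. apply (Rmult_le_reg_l b); [lra|].
    replace (b * (1 / b)) with 1 by (field; lra).
    pose proof (Bd N). pose proof (rs_nonneg N (pj (n - 1)) (pj_nn (n - 1))). nra.
Qed.

Lemma SB_down d : (d < n)%nat -> SB (pj (n - 1 - d)).
Proof.
  induction d; intros Hd.
  - rewrite Nat.sub_0_r. apply SB_base.
  - set (j := (n - 1 - d)%nat). replace (n - 1 - S d)%nat with (j - 1)%nat by (unfold j; lia).
    apply (SB_step _ (pj j) (gc n t (j - 1) * gc n t (j - 1))).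
    + pose proof (gc_nz n t (j - 1) ltac:(unfold j; lia) Hs). nra.
    + apply pj_nn.
    + intros k. apply R1. unfold j, K. lia.
    + apply IHd. lia.
Qed.

Lemma SB_up d : (n + 1 + d < K)%nat -> SB (pj (n + 1 + d)).
Proof.
  induction d; intros Hd.
  - replace (n + 1 + 0)%nat with (S n) by lia. apply SB_base.
  - set (j := (n + 1 + d)%nat). replace (n + 1 + S d)%nat with (S j) by (unfold j; lia).
    apply (SB_step _ (pj j) (mc n t (S j) * mc n t (S j))).
    + pose proof (mc_nz n t (S j) ltac:(unfold j; lia) ltac:(unfold j, K in *; lia) Hs). nra.
    + apply pj_nn.
    + intros k. apply R2. unfold j. lia.
    + apply IHd. lia.
Qed.

Lemma SB_trans j : (j <= K)%nat -> j <> n -> j <> K -> SB (pj j).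
Proof.
  intros H1 H2 H3. destruct (Compare_dec.lt_dec j n).
  - replace j with (n - 1 - (n - 1 - j))%nat by lia. apply SB_down. lia.
  - replace j with (n + 1 + (j - n - 1))%nat by lia. apply SB_up. lia.
Qed.

Lemma pj_cv0 j : (j <= K)%nat -> j <> n -> j <> K -> Un_cv (pj j) 0.
Proof. intros. apply SB_cv0; [apply pj_nn | apply SB_trans; auto]. Qed.

Definition Tr (i : nat) : Prop := (i <= K)%nat /\ i <> n /\ i <> K.

Lemma coh_rec k :
  Cre (rk (S k) n K) = Cre (rk k n K) + gc n t (n - 1) * gc n t (K - 1) * Cre (rk k (n - 1)%nat (K - 1)%nat) /\
  Cim (rk (S k) n K) = Cim (rk k n K) + gc n t (n - 1) * gc n t (K - 1) * Cim (rk k (n - 1)%nat (K - 1)%nat).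
Proof.
  rewrite rk_S. unfold K.
  rewrite Phi_formula by (auto; try lia; apply (Dk k)).
  rewrite gterm_pred by lia. rewrite ec_n, ec_K.
  rewrite (proj1 (Dk k) (S n) (S (9 * n + 8))) by lia.
  unfold scale; simpl. split; ring.
Qed.

Lemma SB_w : SB (fun k => / 2 * pj (n - 1) k + / 2 * pj (K - 1) k).
Proof.
  destruct (SB_trans (n - 1) ltac:(unfold K; lia) ltac:(lia) ltac:(unfold K; lia)) as [B1 H1].
  destruct (SB_trans (K - 1) ltac:(unfold K; lia) ltac:(unfold K; lia) ltac:(unfold K; lia)) as [B2 H2].
  exists (/ 2 * B1 + / 2 * B2). intros N. rewrite rs_lin. specialize (H1 N). specialize (H2 N). lra.
Qed.

Lemma coh_bound k : Rabs (Cre (rk k (n - 1)%nat (K - 1)%nat)) <= / 2 * pj (n - 1) k + / 2 * pj (K - 1) k /\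
                    Rabs (Cim (rk k (n - 1)%nat (K - 1)%nat)) <= / 2 * pj (n - 1) k + / 2 * pj (K - 1) k.
Proof.
  destruct (off_bound K (rk k) (Dk k) (n - 1) (K - 1) ltac:(unfold K; lia) 1 ltac:(lra)) as [A B].
  unfold pj. replace (Cre (rk k (K - 1)%nat (K - 1)%nat) / 1) with (Cre (rk k (K - 1)%nat (K - 1)%nat)) in A, B by field.
  split; lra.
Qed.

Lemma coh_re : exists l, Un_cv (fun k => Cre (rk k n K)) l.
Proof.
  apply (series_cv _ (fun k => Cre (rk k (n - 1)%nat (K - 1)%nat)) (fun k => / 2 * pj (n - 1) k + / 2 * pj (K - 1) k) (gc n t (n - 1) * gc n t (K - 1))).
  - intros k. apply coh_rec.
  - intros k. apply coh_bound.
  - apply SB_w.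
Qed.

Lemma coh_im : exists l, Un_cv (fun k => Cim (rk k n K)) l.
Proof.
  apply (series_cv _ (fun k => Cim (rk k (n - 1)%nat (K - 1)%nat)) (fun k => / 2 * pj (n - 1) k + / 2 * pj (K - 1) k) (gc n t (n - 1) * gc n t (K - 1))).
  - intros k. apply coh_rec.
  - intros k. apply coh_bound.
  - apply SB_w.
Qed.

Lemma Z_out i j : (K < i \/ K < j)%nat -> Ccv (fun k => rk k i j) C0.
Proof. intros H. eapply Ccv_ext; [|apply Ccv_const]. intros k. symmetry. apply (Dk k). auto. Qed.

Lemma Z_diag i : Tr i -> Ccv (fun k => rk k i i) C0.
Proof.
  intros [H1 [H2 H3]]. split; simpl.
  - apply pj_cv0; auto.
  - eapply Un_cv_ext; [|apply Un_cv_const]. intros k. symmetry. apply (diag_im K (rk k) (Dk k)).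
Qed.

Lemma Z_offi i j : i <> j -> Tr i -> Ccv (fun k => rk k i j) C0.
Proof.
  intros Hij [H1 [H2 H3]]. pose proof (pj_cv0 i H1 H2 H3) as Hq.
  split; simpl; apply (vanish _ (pj i) Hq); intros k s Hs0;
  destruct (off_bound K (rk k) (Dk k) i j Hij s Hs0) as [A B];
  pose proof (pj_le1 j k); unfold pj in *; pose proof (Rinv_0_lt_compat s Hs0);
  unfold Rdiv in A, B; nra.
Qed.

Lemma Z_offj i j : i <> j -> Tr j -> Ccv (fun k => rk k i j) C0.
Proof.
  intros Hij [H1 [H2 H3]]. pose proof (pj_cv0 j H1 H2 H3) as Hq.
  split; simpl; apply (vanish _ (pj j) Hq); intros k s Hs0;
  destruct (off_bound K (rk k) (Dk k) i j Hij (/ s) (Rinv_0_lt_compat s Hs0)) as [A B];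
  pose proof (pj_le1 i k); unfold pj in *; pose proof (Rinv_0_lt_compat s Hs0);
  replace (Cre (rk k j j) / / s) with (s * Cre (rk k j j)) in A, B by (field; lra); nra.
Qed.

Lemma Z_any i j : ~ ((i = n \/ i = K) /\ (j = n \/ j = K)) -> Ccv (fun k => rk k i j) C0.
Proof.
  intros H.
  destruct (Compare_dec.le_lt_dec i K) as [Hi|Hi]; [|apply Z_out; auto].
  destruct (Compare_dec.le_lt_dec j K) as [Hj|Hj]; [|apply Z_out; auto].
  destruct (Nat.eq_dec i j) as [->|Hij].
  - apply Z_diag. unfold Tr. tauto.
  - destruct (Nat.eq_dec i n) as [->|Hin]; [|destruct (Nat.eq_dec i K) as [->|HiK]].
    + apply Z_offj; auto. unfold Tr. split; auto. split; auto.
    + apply Z_offj; auto. unfold Tr. split; auto. split; auto.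
    + apply Z_offi; auto. unfold Tr; auto.
Qed.

Lemma main_conv : exists rinf : Op,
  density_on K rinf
  /\ (forall i j, rinf i j <> C0 -> (i = n \/ i = K) /\ (j = n \/ j = K))
  /\ op_converges (fun k => Nat.iter k (Phi K n t p) rho0) rinf.
Proof.
  assert (nK : n <> K) by (unfold K; lia).
  destruct (growing_cv (pj n)) as [Ln HLn].
  { intros k. rewrite R3. pose proof (pj_nn (n - 1) k). pose proof (pj_nn (S n) k). nra. }
  { exists 1. intros z [i ->]. apply pj_le1. }
  destruct (growing_cv (pj K)) as [LK HLK].
  { intros k. apply R4. }
  { exists 1. intros z [i ->]. apply pj_le1. }
  destruct coh_re as [Lr HLr]. destruct coh_im as [Li HLi].
  set (rinf := fun i j =>
    if Nat.eqb i n then (if Nat.eqb j n then mkC Ln 0 else if Nat.eqb j K then mkC Lr Li else C0)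
    else if Nat.eqb i K then (if Nat.eqb j n then mkC Lr (- Li) else if Nat.eqb j K then mkC LK 0 else C0)
    else C0).
  assert (Conv : forall i j, Ccv (fun k => rk k i j) (rinf i j)).
  { intros i j. unfold rinf.
    destruct (Nat.eqb_spec i n) as [->|Hin].
    - destruct (Nat.eqb_spec j n) as [->|Hjn].
      + split; simpl; [exact HLn|].
        eapply Un_cv_ext; [|apply Un_cv_const]. intros k. symmetry. apply (diag_im K (rk k) (Dk k)).
      + destruct (Nat.eqb_spec j K) as [->|HjK].
        * split; [exact HLr | exact HLi].
        * apply Z_any. intros [_ [E|E]]; auto.
    - destruct (Nat.eqb_spec i K) as [->|HiK].
      + destruct (Nat.eqb_spec j n) as [->|Hjn].
        * apply (Ccv_ext (fun k => Cconj (rk k n K))).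
          { intros k. symmetry. apply (Dk k). }
          apply (Ccv_conj _ (mkC Lr Li)). split; [exact HLr|exact HLi].
        * destruct (Nat.eqb_spec j K) as [->|HjK].
          -- split; simpl; [exact HLK|].
             eapply Un_cv_ext; [|apply Un_cv_const]. intros k. symmetry. apply (diag_im K (rk k) (Dk k)).
          -- apply Z_any. intros [_ [E|E]]; auto.
      + apply Z_any. intros [[E|E] _]; auto. }
  exists rinf. split; [|split].
  - apply (dens_limit K rk rinf Dk Conv).
  - intros i j Hne. unfold rinf in Hne.
    destruct (Nat.eqb_spec i n); destruct (Nat.eqb_spec j n); destruct (Nat.eqb_spec i K);
      destruct (Nat.eqb_spec j K); try tauto; exfalso; apply Hne; reflexivity.
  - intros i j. apply (Conv i j).
Qed.

End Main.

Theorem mainTheorem3 (nbar : nat) (theta2 phi : R) :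
  (1 <= nbar)%nat ->
  0 < theta2 ->
  (forall n : nat, (1 <= n <= 9 * nbar + 8)%nat -> sin (theta2 * sqrt (INR n)) <> 0) ->
  (invariant_sub (9 * nbar + 8) (Mg nbar theta2)
   /\ invariant_sub (9 * nbar + 8) (Me nbar theta2)
   /\ invariant_sub (9 * nbar + 8) (Mm nbar theta2 phi))
  /\ (forall rho0 : Op, density_on (9 * nbar + 8) rho0 ->
        exists rinf : Op,
          density_on (9 * nbar + 8) rinf
          /\ (forall i j, rinf i j <> C0 ->
                (i = nbar \/ i = (9 * nbar + 8)%nat) /\ (j = nbar \/ j = (9 * nbar + 8)%nat))
          /\ op_converges
               (fun k => Nat.iter k (Phi (9 * nbar + 8) nbar theta2 phi) rho0) rinf).
Proof.
  intros Hn Ht Hs. split; [split; [|split]|].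
  - intros i j Hj Hi. apply Mg_rowK; lia.
  - intros i j Hj Hi. apply Me_ne; lia.
  - intros i j Hj Hi. apply Mm_ne; lia.
  - intros rho0 D0. apply (main_conv nbar theta2 phi rho0 Hn Hs D0).
Qed.
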